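(* Let $y_i=\theta_i+\sigma z_i$, $i=1,\dots,n$, where $z_1,\dots,z_n$ are i.i.d. sub-Gaussian with parameter $1$, and let $\alpha_1,\dots,\alpha_k$ denote the Haar wavelet coefficients of the vector $pad_0(y_1,\dots,y_n)\in\mathbb{R}^k$, i.e. $\alpha=H\,pad_0(y_1,\dots,y_n)$. Then each $\alpha_i-\mathbb{E}[\alpha_i]$ is sub-Gaussian with parameter $2\sigma$.
   Context: $pad_0(y_1,\dots,y_n)$ is the vector $(y_1-\bar y,\dots,y_n-\bar y)$, $\bar y=\frac1n\sum_i y_i$, followed by zeros up to length $k$, the smallest power of $2$ that is $\ge n$. $H\in\mathbb{R}^{k\times k}$ is the orthonormal discrete Haar wavelet transform matrix. *)

(* Defs.v *)
From HB Require Import structures.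
From mathcomp Require Import all_boot all_order all_algebra.
From mathcomp Require Import all_classical all_reals all_analysis.
Set Implicit Arguments. Unset Strict Implicit. Unset Printing Implicit Defensive.
Import Order.TTheory GRing.Theory Num.Theory.
Local Open Scope classical_set_scope.
Local Open Scope ring_scope.

Definition pow2_ceil (n : nat) : nat := (2 ^ up_log 2 n)%N.

(* Orthonormal discrete Haar wavelet transform matrix of size k = 2^K.
   Row i >= 1, written i = 2^j + m with 0 <= m < 2^j (j = trunc_log 2 i):
   the Haar wavelet psi_{j,m}, supported on the block [m L, (m+1) L) with
   L = k / 2^j, equal to +sqrt(2^j/k) on the first half of the block and
   -sqrt(2^j/k) on the second half. *)
Definition haar_mx (R : realType) (k : nat) : 'M[R]_k :=
  \matrix_(i < k, t < k)
    if (i == 0 :> nat) then (Num.sqrt (k%:R))^-1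
    else
      let j := trunc_log 2 i in
      let m := (i - 2 ^ j)%N in
      let L := (k %/ 2 ^ j)%N in
      let c := Num.sqrt ((2 ^ j)%:R / k%:R) in
      if ((m * L <= t) && (t < m * L + L %/ 2))%N then c
      else if ((m * L + L %/ 2 <= t) && (t < m * L + L))%N then - c
      else 0.

Definition pad0 (R : realType) (n : nat) (y : 'I_n -> R) : 'cV[R]_(pow2_ceil n) :=
  let ybar := (\sum_(i < n) y i) / n%:R in
  \col_(t < pow2_ceil n)
    match @insub nat (fun m => (m < n)%N) 'I_n (nat_of_ord t) with
    | Some i => y i - ybar
    | None => 0
    end.

Definition subgaussian d (T : measurableType d) (R : realType)
    (P : probability T R) (X : T -> R) (s : R) : Prop :=
  [/\ measurable_fun setT X,
      P.-integrable setT (EFin \o X),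
      (\int[P]_x (X x)%:E = 0)%E &
      forall l : R,
        (\int[P]_x (expR (l * X x))%:E <= (expR (l ^+ 2 * s ^+ 2 / 2))%:E)%E].

Definition mutually_independent d (T : measurableType d) (R : realType)
    (P : probability T R) (n : nat) (Z : 'I_n -> T -> R) : Prop :=
  forall B : 'I_n -> set R, (forall i, measurable (B i)) ->
    P (\bigcap_i (Z i @^-1` B i)) = (\prod_(i < n) P (Z i @^-1` B i))%E.

Definition identically_distributed d (T : measurableType d) (R : realType)
    (P : probability T R) (n : nat) (Z : 'I_n -> T -> R) : Prop :=
  forall (i j : 'I_n) (B : set R), measurable B ->
    P (Z i @^-1` B) = P (Z j @^-1` B).

(* Main.v *)
Require Import Defs.
From HB Require Import structures.
From mathcomp Require Import all_boot all_order all_algebra.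
From mathcomp Require Import all_classical all_reals all_analysis.
From mathcomp Require Import measurable_realfun measurable_fun_approximation.
Import Order.TTheory GRing.Theory Num.Theory.
From mathcomp Require Import ring lra zify.
Import HBNNSimple.
Local Open Scope classical_set_scope.
Local Open Scope ring_scope.
Section indep.
Context d (T : measurableType d) (R : realType) (P : probability T R).
Local Open Scope ereal_scope.

Lemma simple_integral (s : {nnsfun R >-> R}) (X : T -> R)
  (mX : measurable_fun setT X) (A : T -> R) (mA : measurable_fun setT A)
  (A0 : forall x, (0 <= A x)%R) :
 \int[P]_x ((s (X x))%:E * (A x)%:E) =
 \sum_(y \in range s) (y%:E * \int[P]_x ((\1_(s @^-1` [set y]) (X x))%:E * (A x)%:E)).
Proof.
under eq_integral do rewrite -EFinM fimfunE mulr_fsuml -fsumEFin//.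
rewrite ge0_integral_fsum//; last 2 first.
- move=> y; apply/measurable_EFinP; apply: measurable_funM => //.
  by apply: measurable_funM => //; apply: measurableT_comp => //.
- move=> y x _; rewrite lee_fin mulr_ge0//.
  by have := nnfun_muleindic_ge0 s y (X x); rewrite -EFinM lee_fin.
apply: eq_fsbigr => y _.
have [y0|y0] := ltP y 0%R.
  rewrite (preimage_nnfun0 _ y0) !integral0_eq ?mule0// => x _.
    by rewrite indic0 mul0e.
  by rewrite indic0 mulr0 mul0r.
under eq_integral do rewrite -mulrA EFinM.
rewrite ge0_integralZl_EFin//.
- by move=> x _; rewrite lee_fin mulr_ge0.
- by apply/measurable_EFinP; apply: measurable_funM => //; apply: measurableT_comp.
Qed.

Lemma int_indic_comp (X : T -> R) (mX : measurable_fun setT X) (S : set R) :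
  measurable S -> \int[P]_x (\1_S (X x))%:E = P (X @^-1` S).
Proof.
move=> mS.
have mXS : measurable (X @^-1` S) by rewrite -[X @^-1` S]setTI; exact: mX.
transitivity (\int[P]_x (\1_(X @^-1` S) x)%:E).
  by apply: eq_integral => x _; rewrite !indicE.
by rewrite integral_indic// setIT.
Qed.

Lemma step_ind (X : T -> R) (mX : measurable_fun setT X) (A : T -> R)
  (mA : measurable_fun setT A) (A0 : forall x, (0 <= A x)%R)
  (K : \bar R) (Kf : K \is a fin_num) (K0 : 0 <= K)
  (H : forall C, measurable C ->
     \int[P]_x ((\1_C (X x))%:E * (A x)%:E) = P (X @^-1` C) * K)
  (h : R -> R) (mh : measurable_fun setT h) (h0 : forall r, (0 <= h r)%R) :
  \int[P]_x ((h (X x))%:E * (A x)%:E) = (\int[P]_x (h (X x))%:E) * K.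
Proof.
have mEh : measurable_fun setT (EFin \o h) by apply/measurable_EFinP.
have Eh0 : forall r, [set: R] r -> 0 <= (EFin \o h) r by move=> r _; rewrite lee_fin.
pose f_ := nnsfun_approx measurableT mEh.
have cf r : (f_ k r)%:E @[k --> \oo] --> (h r)%:E.
  exact: (@cvg_nnsfun_approx _ _ _ setT measurableT _ mEh Eh0 r I).
have ndf r : {homo (fun k => f_ k r) : a b / (a <= b)%N >-> (a <= b)%R}.
  by move=> a b ab; exact/lefP/nd_nnsfun_approx.
have mfX k : measurable_fun setT (fun x => (f_ k (X x))%:E).
  by apply/measurable_EFinP; apply: measurableT_comp.
have simple k : \int[P]_x ((f_ k (X x))%:E * (A x)%:E) =
    (\int[P]_x (f_ k (X x))%:E) * K.
  rewrite simple_integral//.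
  have := @simple_integral (f_ k) X mX (fun=> 1%R) (measurable_cst _) (fun=> ler01).
  under eq_integral do rewrite mule1.
  move=> ->.
  rewrite ge0_mule_fsuml; last first.
    move=> y; have [y0|y0] := ltP y 0%R.
      by rewrite (preimage_nnfun0 _ y0) integral0_eq ?mule0// => x _; rewrite indic0 mul0e.
    by apply: mule_ge0; [rewrite lee_fin|apply: integral_ge0 => x _; rewrite mule1 lee_fin].
  apply: eq_fsbigr => y _; rewrite -muleA; congr (_ * _).
  rewrite H; last by apply: (measurable_funPTI (f_ k)); exact: measurable_set1.
  congr (_ * _); rewrite -int_indic_comp//.
  by apply: eq_integral => x _; rewrite mule1.
transitivity (\int[P]_x limn (fun k => (f_ k (X x))%:E * (A x)%:E)).
  apply: eq_integral => x _; apply/esym/cvg_lim => //.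
  by apply: cvgeZr => //; exact: cf.
rewrite monotone_convergence//; last 3 first.
- by move=> k; apply: emeasurable_funM => //; apply/measurable_EFinP.
- by move=> k x _; rewrite -EFinM lee_fin mulr_ge0.
- by move=> x _ a b ab; apply: lee_wpmul2r; rewrite ?lee_fin//; exact: ndf.
under eq_fun do rewrite simple.
have ndI : {homo (fun k => \int[P]_x (f_ k (X x))%:E) : a b / (a <= b)%N >-> a <= b}.
  move=> a b ab; apply: ge0_le_integral => //.
  by move=> x _; rewrite lee_fin.
  by move=> x _; rewrite lee_fin; exact: ndf.
rewrite (cvg_lim _ (cvgeZr Kf (ereal_nondecreasing_is_cvgn ndI)))//.
congr (_ * _); rewrite -monotone_convergence//.
- apply: eq_integral => x _; apply/cvg_lim => //; exact: cf.
- by move=> k x _; rewrite lee_fin.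
- by move=> x _ a b ab; rewrite lee_fin; exact: ndf.
Qed.

Section claim.
Variables (n : nat) (Z : 'I_n -> T -> R).
Hypothesis mZ : forall i, measurable_fun setT (Z i).
Hypothesis indep : mutually_independent P Z.

Definition Fm (m : nat) (g : 'I_n -> R -> R) (B : 'I_n -> set R) (w : T) : R :=
  (\prod_(i < n) (if (i < m)%N then g i (Z i w) else \1_(B i) (Z i w)))%R.

Lemma mZpre i (C : set R) : measurable C -> measurable (Z i @^-1` C).
Proof. by move=> mC; rewrite -[_ @^-1` _]setTI; exact: mZ. Qed.

Lemma claim0 (g : 'I_n -> R -> R) (B : 'I_n -> set R) :
  (forall i, measurable (B i)) ->
  \int[P]_x (Fm 0 g B x)%:E = \prod_(i < n) P (Z i @^-1` B i).
Proof.
move=> mB.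
have mS : measurable (\bigcap_i (Z i @^-1` B i)).
  by apply: fin_bigcap_measurable => // i _; exact: mZpre.
rewrite -indep// -[X in P X]setIT -integral_indic//.
apply: eq_integral => w _; congr EFin; rewrite /Fm.
have [H|H] := pselect (forall i, B i (Z i w)).
  rewrite big1; last by move=> i _; rewrite /= indicE mem_set.
  by rewrite indicE mem_set// => i _; exact: H.
move/existsNP : H => [i Hi].
rewrite (bigD1 i)//= indicE memNset// mul0r indicE memNset//.
by move=> /(_ i I).
Qed.


Lemma claim m : (m <= n)%N -> forall (g : 'I_n -> R -> R) (B : 'I_n -> set R),
  (forall i, measurable_fun setT (g i)) -> (forall i r, (0 <= g i r)%R) ->
  (forall i, \int[P]_x (g i (Z i x))%:E \is a fin_num) ->
  (forall i, measurable (B i)) ->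
  \int[P]_x (Fm m g B x)%:E = \prod_(i < n)
     (if (i < m)%N then \int[P]_x (g i (Z i x))%:E else P (Z i @^-1` B i)).
Proof.
elim: m => [_ g B mg g0 gf mB|m IH lemn g B mg g0 gf mB].
  by rewrite claim0//; apply: eq_bigr => i _; rewrite ltn0.
pose i0 : 'I_n := Ordinal lemn.
have i0m : nat_of_ord i0 = m by [].
pose Ai (i : 'I_n) w := if (i < m)%N then g i (Z i w) else \1_(B i) (Z i w).
pose A w := (\prod_(i < n) (if i != i0 then Ai i w else 1))%R.
pose Ki (i : 'I_n) := if (i < m)%N then \int[P]_x (g i (Z i x))%:E else P (Z i @^-1` B i).
pose K := \prod_(i < n) (if i != i0 then Ki i else 1).
have Hi i : i != i0 -> (i < m.+1)%N = (i < m)%N.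
  move=> /eqP ne; rewrite ltnS leq_eqVlt; case: eqP => //= e.
  by exfalso; apply: ne; exact: val_inj.
have FE w : Fm m.+1 g B w = (g i0 (Z i0 w) * A w)%R.
  rewrite /Fm (bigD1 i0)//= ltnSn; congr (_ * _)%R.
  rewrite /A big_mkcond; apply: eq_bigr => i _.
  by case: ifPn => // ne; rewrite Hi.
have KE : \prod_(i < n)
     (if (i < m.+1)%N then \int[P]_x (g i (Z i x))%:E else P (Z i @^-1` B i)) =
    \int[P]_x (g i0 (Z i0 x))%:E * K.
  rewrite (bigD1 i0)//= ltnSn; congr (_ * _).
  rewrite /K big_mkcond; apply: eq_bigr => i _.
  by case: ifPn => // ne; rewrite Hi.
have mAi i : measurable_fun setT (Ai i).
  rewrite /Ai; case: (i < m)%N.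
    exact: (measurableT_comp (mg i) (mZ i)).
  apply: measurableT_comp (mZ i); exact: measurable_indic.
have mA : measurable_fun setT A.
  by apply: measurable_prod => i _; case: (i != i0).
have A0 w : (0 <= A w)%R.
  apply: prodr_ge0 => i _; case: ifPn => // _; rewrite /Ai; case: ifPn => _.
    exact: g0.
  by rewrite indicE.
have Kf : K \is a fin_num.
  apply: prode_fin_num => i _; case: ifPn => // _; rewrite /Ki; case: ifPn => // _.
  by rewrite fin_num_measure//; exact: mZpre.
have K0 : 0 <= K.
  apply: prode_ge0 => i _; case: ifPn => // _; rewrite /Ki; case: ifPn => // _.
  by apply: integral_ge0 => x _; rewrite lee_fin.
have H C : measurable C ->
    \int[P]_x ((\1_C (Z i0 x))%:E * (A x)%:E) = P (Z i0 @^-1` C) * K.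
  move=> mC.
  pose B' i := if i == i0 then C else B i.
  have mB' i : measurable (B' i) by rewrite /B'; case: ifP.
  have := IH (ltnW lemn) g B' mg g0 gf mB'.
  have KE' : K = \prod_(i < n | i != i0)
      (if (i < m)%N then \int[P]_x (g i (Z i x))%:E else P (Z i @^-1` B' i)).
    rewrite [RHS]big_mkcond /K; apply: eq_bigr => i _.
    by case: ifPn => // ne; rewrite /Ki /B' (negbTE ne).
  rewrite (bigD1 i0)//= -KE' ltnn /B' eqxx => <-.
  apply: eq_integral => x _; rewrite -EFinM; congr EFin.
  rewrite /Fm (bigD1 i0)//= ltnn eqxx; congr (_ * _)%R.
  rewrite [RHS]big_mkcond /A; apply: eq_bigr => i _.
  by case: ifPn => // ne; rewrite /Ai (negbTE ne).
under eq_integral do rewrite FE EFinM.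
rewrite KE; apply: step_ind => //.
Qed.


Lemma mgf_prod (a : 'I_n -> R)
  (fin : forall i, \int[P]_x (expR (a i * Z i x))%:E \is a fin_num) :
  \int[P]_x (expR (\sum_(i < n) a i * Z i x))%:E =
  \prod_(i < n) \int[P]_x (expR (a i * Z i x))%:E.
Proof.
transitivity (\int[P]_x (Fm n (fun i r => expR (a i * r)) (fun=> setT) x)%:E).
  apply: eq_integral => x _; rewrite /Fm expR_sum; congr EFin.
  by apply: eq_bigr => i _; rewrite ltn_ord.
rewrite claim//.
- by apply: eq_bigr => i _; rewrite ltn_ord.
- move=> i; apply: measurableT_comp => //; apply: measurable_funM => //.
Qed.


Lemma subg_lin (b : 'I_n -> R) (s : R) :
  (forall i, subgaussian P (Z i) 1) ->
  (\sum_(i < n) b i ^+ 2 <= s ^+ 2)%R ->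
  subgaussian P (fun w => \sum_(i < n) b i * Z i w)%R s.
Proof.
move=> sg hb.
have intZ i : P.-integrable setT (EFin \o Z i) by case: (sg i).
have EZ i : \int[P]_x (Z i x)%:E = 0 by case: (sg i).
have mgf i l : \int[P]_x (expR (l * Z i x))%:E <= (expR (l ^+ 2 / 2))%:E.
  by case: (sg i) => _ _ _ /(_ l); rewrite expr1n mulr1.
have intb i : P.-integrable setT (fun x => (b i * Z i x)%:E).
  exact: (integrableZl _ (b i) (intZ i)).
split.
- by apply: measurable_sum => i; apply: measurable_funM.
- have -> : EFin \o (fun w => \sum_(i < n) b i * Z i w)%R =
      (fun w => \sum_(i < n) (b i * Z i w)%:E)%R.
    by apply/funext => w /=; rewrite sumEFin.
  by apply: integrable_sum => // i _.
- under eq_integral do rewrite -sumEFin.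
  rewrite integral_sum// big1// => i _.
  under eq_integral do rewrite EFinM.
  rewrite integralZl//; last exact: intZ i.
  rewrite (_ : \int[P]_x (Z i x)%:E = 0) ?mule0//; exact: EZ i.
- move=> l.
  have fin i : \int[P]_x (expR ((l * b i) * Z i x))%:E \is a fin_num.
    rewrite ge0_fin_numE; last by apply: integral_ge0 => x _; rewrite lee_fin expR_ge0.
    exact: (le_lt_trans (mgf i _) (ltry _)).
  under eq_integral do rewrite mulr_sumr (eq_bigr _ (fun i _ => mulrA l (b i) (Z i _))).
  rewrite mgf_prod//.
  rewrite (eq_bigr (fun i => (fine (\int[P]_x (expR ((l * b i) * Z i x))%:E))%:E));
    last by move=> i _; rewrite fineK.
  rewrite prodEFin lee_fin.
  apply: (@le_trans _ _ (\prod_(i < n) expR ((l * b i) ^+ 2 / 2))%R).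
    apply: ler_prod => i _; rewrite fine_ge0 /=; last first.
      by apply: integral_ge0 => x _; rewrite lee_fin expR_ge0.
    by rewrite -lee_fin fineK.
  rewrite -expR_sum ler_expR -mulr_suml.
  under eq_bigr do rewrite exprMn.
  by rewrite -mulr_sumr ler_wpM2r// ler_wpM2l// sqr_ge0.
Qed.

End claim.
End indep.
Lemma count_window a L k :
  (\sum_(t < k) ((a <= t) && (t < a + L)) <= L)%N.
Proof.
suff -> : (\sum_(t < k) ((a <= t) && (t < a + L)))%N = (minn k (a + L) - a)%N by lia.
elim: k => [|k IH]; first by rewrite big_ord0 min0n.
rewrite big_ord_recr /= IH.
case: (leqP a k) => ak; case: (ltnP k (a + L)) => kL /=; lia.
Qed.

Lemma haar_row_le1 (R : realType) (k : nat) (i : 'I_k) :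
  (0 < k)%N -> \sum_(t < k) (haar_mx R k i t) ^+ 2 <= 1.
Proof.
move=> k0.
have kR : (0 < k%:R :> R) by rewrite ltr0n.
under eq_bigr do rewrite mxE.
have [i0|i0] := boolP (i == 0 :> nat); rewrite ?i0 ?(negbTE i0) /=.
  under eq_bigr do rewrite exprVn sqr_sqrtr ?ler0n//.
  by rewrite sumr_const card_ord -(mulr_natr (k%:R^-1)) mulVf ?gt_eqF.
set j := trunc_log 2 i.
set m := (i - 2 ^ j)%N.
set L := (k %/ 2 ^ j)%N.
set c := Num.sqrt _.
have c2 : c ^+ 2 = (2 ^ j)%:R / k%:R by rewrite sqr_sqrtr// divr_ge0.
apply: (@le_trans _ _ (\sum_(t < k) c ^+ 2 * ((m * L <= t) && (t < m * L + L))%N%:R)).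
  apply: ler_sum => t _.
  case: ifPn => [/andP[h1 h2]|n1].
    by rewrite h1 /= (leq_trans h2) ?leq_add2l ?leq_div// mulr1.
  case: ifPn => [/andP[h1 h2]|n2].
    rewrite sqrrN h2 andbT (leq_trans _ h1) ?leq_addr// mulr1//.
  by rewrite expr0n /= mulr_ge0 ?sqr_ge0.
rewrite -mulr_sumr -natr_sum c2.
apply: (@le_trans _ _ ((2 ^ j)%:R / k%:R * L%:R)).
  by rewrite ler_wpM2l ?divr_ge0// ler_nat count_window.
rewrite mulrAC ler_pdivrMr// mul1r -natrM ler_nat mulnC.
exact: leq_trunc_div.
Qed.

Lemma center_le (R : realType) (n : nat) (h : 'I_n -> R) :
  \sum_(j < n) (h j - (\sum_(j < n) h j) / n%:R) ^+ 2 <= \sum_(j < n) h j ^+ 2.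
Proof.
case: n h => [|n] h; first by rewrite !big_ord0.
set S := \sum_(j < n.+1) h j; set hb := S / n.+1%:R.
have E : hb * n.+1%:R = S by rewrite /hb divfK.
rewrite (eq_bigr (fun j => h j ^+ 2 - h j * (hb * 2) + hb ^+ 2)); last first.
  by move=> j _; ring.
rewrite big_split /= sumrB sumr_const card_ord -mulr_suml -/S -mulr_natr.
rewrite -E -(mulr_natr (hb ^+ 2)).
have h0 : 0 <= hb ^+ 2 * n.+1%:R by rewrite mulr_ge0 ?sqr_ge0.
nra.
Qed.

Lemma narrow_pad (R : realType) n k (le : (n <= k)%N) (F : 'I_k -> R) (G : 'I_n -> R) :
  \sum_(t < k) F t * (match @insub nat (fun m => (m < n)%N) 'I_n (nat_of_ord t) with
                      | Some j => G j | None => 0 end) =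
  \sum_(j < n) F (widen_ord le j) * G j.
Proof.
rewrite (bigID (fun t : 'I_k => (t < n)%N)) /= [X in _ + X]big1 ?addr0; last first.
  by move=> t /negbTE tn; rewrite insubF // mulr0.
by rewrite (big_ord_narrow le); apply: eq_bigr => j _; rewrite /= valK.
Qed.

Lemma narrow_sq (R : realType) n k (le : (n <= k)%N) (F : 'I_k -> R) :
  \sum_(j < n) F (widen_ord le j) ^+ 2 <= \sum_(t < k) F t ^+ 2.
Proof.
rewrite (bigID (fun t : 'I_k => (t < n)%N)) /= (big_ord_narrow le) lerDl.
by apply: sumr_ge0 => t _; rewrite sqr_ge0.
Qed.

Theorem lemma2 (d : measure_display) (T : measurableType d) (R : realType)
    (P : probability T R) (n : nat) (theta : 'I_n -> R) (sigma : R)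
    (z : 'I_n -> T -> R) :
  (forall i, subgaussian P (z i) 1) ->
  mutually_independent P z ->
  identically_distributed P z ->
  let y := fun (w : T) (i : 'I_n) => theta i + sigma * z i w in
  let alpha := fun w : T => haar_mx R (pow2_ceil n) *m pad0 (y w) in
  forall i : 'I_(pow2_ceil n),
    subgaussian P
      (fun w => alpha w i 0 - fine (\int[P]_x (alpha x i 0)%:E)) (2 * sigma).
Proof.
move=> sg ind _ y alpha i.
have mz j : measurable_fun setT (z j) by case: (sg j).
have le : (n <= pow2_ceil n)%N by rewrite /pow2_ceil; exact: up_logP.
have k0 : (0 < pow2_ceil n)%N by rewrite /pow2_ceil expn_gt0.
pose h j := haar_mx R (pow2_ceil n) i (widen_ord le j).
pose hb := (\sum_(j < n) h j) / n%:R.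
pose c j := h j - hb.
pose S w := \sum_(j < n) (sigma * c j) * z j w.
have hS : subgaussian P S (2 * sigma).
  apply: (@subg_lin _ _ _ P n z mz ind (fun j => sigma * c j) (2 * sigma) sg).
  under eq_bigr do rewrite exprMn.
  rewrite -mulr_sumr exprMn mulrC ler_wpM2r ?sqr_ge0//.
  rewrite /c /hb; apply: le_trans; first exact: (center_le _ _ h).
  apply: le_trans; first exact: (narrow_sq _ _ _ le (fun t => haar_mx R (pow2_ceil n) i t)).
  apply: le_trans; first exact: (haar_row_le1 R _ i k0).
  lra.
pose a0 := \sum_(j < n) c j * theta j.
have alphaE w : alpha w i 0 = a0 + S w.
  rewrite /alpha mxE /pad0 /=.
  under eq_bigr do rewrite mxE.
  rewrite narrow_pad /a0 /S /c /hb /y.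
  set Y := (\sum_(j < n) (theta j + sigma * z j w)) / n%:R.
  have e1 : \sum_(j < n) h j * (theta j + sigma * z j w - Y) =
     \sum_(j < n) h j * theta j + sigma * \sum_(j < n) h j * z j w
     - (\sum_(j < n) h j) * Y.
    rewrite mulr_suml mulr_sumr -big_split -sumrB /=.
    by apply: eq_bigr => j _; ring.
  have e2 : Y = ((\sum_(j < n) theta j) + sigma * \sum_(j < n) z j w) / n%:R.
    by rewrite /Y big_split /= mulr_sumr.
  have e3 : \sum_(j < n) (h j - (\sum_(j0 < n) h j0) / n%:R) * theta j =
     \sum_(j < n) h j * theta j - (\sum_(j0 < n) h j0) / n%:R * \sum_(j < n) theta j.
    rewrite mulr_sumr -sumrB; apply: eq_bigr => j _; ring.
  have e4 : \sum_(j < n) sigma * (h j - (\sum_(j0 < n) h j0) / n%:R) * z j w =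
     sigma * (\sum_(j < n) h j * z j w
       - (\sum_(j0 < n) h j0) / n%:R * \sum_(j < n) z j w).
    rewrite mulr_sumr -sumrB mulr_sumr; apply: eq_bigr => j _; ring.
  rewrite -/h e1 e2 e3 e4; ring.
have Ealpha : fine (\int[P]_x (alpha x i 0)%:E) = a0.
  case: hS => _ iS ES _.
  under eq_integral do rewrite alphaE EFinD.
  rewrite integralD//; last exact: finite_measure_integrable_cst.
  have P1 : P [set: T] = 1%E by exact: probability_setT.
  have S0 : (\int[P]_x (S x)%:E = 0)%E by exact: ES.
  rewrite integral_cst// S0 adde0.
  set Q := (X in (a0%:E * X)%E).
  have -> : Q = 1%E by exact: probability_setT.
  by rewrite mule1.
have -> : (fun w => alpha w i 0 - fine (\int[P]_x (alpha x i 0)%:E)) = S.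
  by apply/funext => w; rewrite Ealpha alphaE addrC addKr.
exact: hS.
Qed.
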